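(* Let $p\geq1$, $n\geq2$, $\sigma>0$. For $i=1,2$ let $1\leq\Delta_i\leq n$, $0<\kappa_i<\sigma^2$, $u_i\in S^{p-1}$, and let $V_i\in\mathbb{R}^{pn\times pn}$ be the block diagonal matrix $V_i=\mathrm{Diag}(V_{1,i},\ldots,V_{n,i})$ with $V_{j,i}=\sigma^2I_p-\kappa_iu_iu_i^\top$ for $j\leq\Delta_i$ and $V_{j,i}=\sigma^2I_p$ for $j>\Delta_i$. Assume $\Delta_1\leq\Delta_2$. If $X\sim\mathrm{N}(0,\sigma^2I_{pn})$, then $$\mathbb{E}\Big\{\frac{\phi_{V_1}(X)\phi_{V_2}(X)}{\phi^2_{\sigma^2I}(X)}\Big\}\leq\exp\Big[\frac12\langle u_1,u_2\rangle^2\Big\{\sqrt{\tfrac{\Delta_1}{\Delta_2}}(\Delta_2\alpha_2^2)^{1/2}(\Delta_1\alpha_1^2)^{1/2}\wedge\Delta_1\alpha_1\Big\}\Big],$$ where $\alpha_i=\kappa_i(\sigma^2-\kappa_i)^{-1}$ for $i=1,2$.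
   Context: For a positive definite matrix $M$, $\phi_M$ denotes the density of the centered Gaussian distribution $\mathrm{N}(0,M)$; $S^{p-1}$ is the Euclidean unit sphere in $\mathbb{R}^p$. *)

(* Defs.v *)
From mathcomp Require Import all_boot all_order all_algebra.
From mathcomp Require Import all_classical all_reals all_analysis.
Set Implicit Arguments. Unset Strict Implicit. Unset Printing Implicit Defensive.
Import Order.TTheory GRing.Theory Num.Theory.
Local Open Scope ring_scope.

Definition vecN (R : realType) (N : nat) (x : nat -> R) : 'cV[R]_N :=
  \col_(i < N) x i.

Definition gauss_density (R : realType) (N : nat) (M : 'M[R]_N) (x : 'cV[R]_N) : R :=
  (Num.sqrt ((2 * pi) ^+ N * \det M))^-1 *
  expR (- (1/2) * ((x^T *m invmx M *m x) ord0 ord0)).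

(* Lebesgue integral over R^N of a function of the first N coordinates,
   written as the iterated integral dx_0 dx_1 ... dx_{N-1}
   (equal to the integral w.r.t. N-dimensional Lebesgue measure for
   nonnegative measurable integrands, by Tonelli). *)
Fixpoint lebN (R : realType) (N : nat) (f : (nat -> R) -> \bar R) : \bar R :=
  match N with
  | 0 => f (fun _ => 0)
  | N'.+1 => (\int[@lebesgue_measure R]_(t in setT)
               lebN N' (fun y => f (fun k => if k is k'.+1 then y k' else t)))%E
  end.

Definition gauss_expect (R : realType) (N : nat) (s2 : R) (g : 'cV[R]_N -> R) : \bar R :=
  lebN N (fun x => (g (vecN N x) * gauss_density (s2 *: 1%:M) (vecN N x))%:E).

(* Block-diagonal matrix Diag(V_1,...,V_n) in R^{pn x pn}, with
   V_j = s2 I_p - kappa u u^T for j <= Delta (1-based) and s2 I_p otherwise.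
   Coordinate a of R^{pn} lies in block a %/ p (0-based), position a %% p. *)
(* k-th coordinate of u (0 if k >= p). *)
Definition ucoord (R : realType) (p : nat) (u : 'cV[R]_p) (k : nat) : R :=
  \sum_(i < p | nat_of_ord i == k) u i ord0.

Definition Vmat (R : realType) (p n : nat) (s2 kappa : R) (Delta : nat)
    (u : 'cV[R]_p) : 'M[R]_(p * n) :=
  \matrix_(a < p * n, b < p * n)
    ((a == b)%:R * s2
     - (((a %/ p == b %/ p) && (a %/ p < Delta))%N%:R *
        (kappa * ucoord u (a %% p) * ucoord u (b %% p)))).

Definition dotv (R : realType) (p : nat) (u v : 'cV[R]_p) : R :=
  \sum_(i < p) u i ord0 * v i ord0.

(* Main.v *)
Require Import Defs.
From mathcomp Require Import all_boot all_order all_algebra.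
From mathcomp Require Import all_classical all_reals all_analysis.
From mathcomp Require Import ring lra.
Set Implicit Arguments. Unset Strict Implicit. Unset Printing Implicit Defensive.
Import Order.TTheory GRing.Theory Num.Theory.
Local Open Scope ring_scope.

Section M.
Variable R : realFieldType.

Definition qf N (Q : 'M[R]_N) (v : 'cV[R]_N) : R := (v^T *m Q *m v) 0 0.

Lemma tr11 (A : 'M[R]_1) : A^T = A.
Proof. by apply/matrixP => i j; rewrite !ord1 mxE. Qed.

Lemma m11D (A B : 'M[R]_1) : (A + B) 0 0 = A 0 0 + B 0 0.
Proof. by rewrite mxE. Qed.

Lemma m11Z a (A : 'M[R]_1) : (a *: A) 0 0 = a * A 0 0.
Proof. by rewrite mxE. Qed.

Lemma m11B (A B : 'M[R]_1) : (A - B) 0 0 = A 0 0 - B 0 0.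
Proof. by rewrite !mxE. Qed.

Lemma sc11 (a : R) : (a%:M : 'M[R]_1) 0 0 = a.
Proof. by rewrite mxE eqxx mulr1n. Qed.

Lemma qf_step N (Q : 'M[R]_(1+N)) (tau : R) (w : 'cV[R]_N) :
  Q^T = Q -> drsubmx Q \in unitmx ->
  qf Q (col_mx (tau%:M) w) =
  qf (drsubmx Q) (w + tau *: (invmx (drsubmx Q) *m dlsubmx Q))
  + (ulsubmx Q 0 0 - ((dlsubmx Q)^T *m (invmx (drsubmx Q) *m dlsubmx Q)) 0 0) * tau ^+ 2.
Proof.
move=> QT uC.
set C := drsubmx Q; set b := dlsubmx Q; set r := invmx C *m b.
have Ct : C^T = C by rewrite /C trmx_drsub QT.
have hur : ursubmx Q = b^T by rewrite /b trmx_dlsub QT.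
have hul : ulsubmx Q = (ulsubmx Q 0 0)%:M by rewrite {1}[ulsubmx Q]mx11_scalar.
have Cr : C *m r = b by rewrite /r mulKVmx.
have rC : r^T *m C = b^T by rewrite -[in LHS]Ct -trmx_mul Cr.
have YX : w^T *m b = b^T *m w by rewrite -[LHS]tr11 trmx_mul trmxK.
have rb : r^T *m b = b^T *m r by rewrite -[LHS]tr11 trmx_mul trmxK.
set q := ulsubmx Q 0 0.
rewrite /qf -[in LHS](submxK Q) -/C -/b hul hur tr_col_mx tr_scalar_mx mul_row_block mul_row_col.
rewrite !mul_scalar_mx.
rewrite (@mulmxDl _ 1 1 1) (@mulmxDl _ 1 N 1) !mul_mx_scalar -!scalemxAl YX.
rewrite linearD /= linearZ /=.
rewrite (_ : (w + tau *: r)^T = w^T + tau *: r^T); last by rewrite linearD /= linearZ.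
rewrite (@mulmxDl _ 1 N N) !(@mulmxDl _ 1 N 1) -!scalemxAl -!scalemxAr rC.
rewrite -!mulmxA Cr YX.
rewrite !m11D !m11Z sc11 /q.
ring.
Qed.

Definition PD N (Q : 'M[R]_N) := Q^T = Q /\ forall v, v != 0 -> 0 < qf Q v.

Lemma qf0 N (Q : 'M[R]_N) : qf Q 0 = 0.
Proof. by rewrite /qf mulmx0 mxE. Qed.

Lemma PD_sub N (Q : 'M[R]_(1+N)) : PD Q -> PD (drsubmx Q).
Proof.
move=> [QT QP]; split; first by rewrite trmx_drsub QT.
move=> z z0.
have -> : qf (drsubmx Q) z = qf Q (col_mx 0 z).
  rewrite /qf -[in RHS](submxK Q) tr_col_mx trmx0 mul_row_block mul_row_col.
  rewrite !mul0mx !add0r.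
  by rewrite mulmx0 add0r.
by apply: QP; rewrite col_mx_eq0 negb_and z0 orbT.
Qed.

Lemma schur_det N (Q : 'M[R]_(1+N)) : Q^T = Q -> drsubmx Q \in unitmx ->
  \det Q = (ulsubmx Q 0 0 - ((dlsubmx Q)^T *m (invmx (drsubmx Q) *m dlsubmx Q)) 0 0)
            * \det (drsubmx Q).
Proof.
move=> QT uC.
set C := drsubmx Q; set b := dlsubmx Q; set r := invmx C *m b.
have Ct : C^T = C by rewrite /C trmx_drsub QT.
have hur : ursubmx Q = b^T by rewrite /b trmx_dlsub QT.
have Cr : C *m r = b by rewrite /r mulKVmx.
have rC : r^T *m C = b^T by rewrite -[in LHS]Ct -trmx_mul Cr.
have rb : r^T *m b = b^T *m r by rewrite -[LHS]tr11 trmx_mul trmxK.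
set L : 'M[R]_(1+N) := block_mx 1%:M (- r^T) 0 1%:M.
have dL : \det L = 1 by rewrite det_ublock !det1 mulr1.
have LQ : L *m Q = block_mx (ulsubmx Q - b^T *m r) 0 b C.
  rewrite /L -[in LHS](submxK Q) mulmx_block -/C -/b hur.
  by rewrite !mul1mx !mul0mx !add0r !mulNmx rC rb subrr.
have := det_mulmx L Q; rewrite dL mul1r LQ det_lblock det_mx11 => <-.
by rewrite m11B.
Qed.

Lemma PD_det N (Q : 'M[R]_N) : PD Q -> 0 < \det Q.
Proof.
elim: N Q => [|N IH] Q PDQ; first by rewrite det_mx00.
have [QT QP] := PDQ.
have PC := PD_sub (PDQ : PD (Q : 'M[R]_(1+N))).
have dC := IH _ PC.
have uC : drsubmx (Q : 'M[R]_(1+N)) \in unitmx by rewrite unitmxE unitfE gt_eqF.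
rewrite (schur_det QT uC) mulr_gt0 //.
set r := invmx (drsubmx (Q : 'M[R]_(1+N))) *m dlsubmx (Q : 'M[R]_(1+N)).
have := QP (col_mx (1%:M) (- r)).
rewrite (qf_step _ _ QT uC) -/r scale1r addNr qf0 add0r expr1n mulr1; apply.
apply/negP => /eqP/matrixP/(_ (lshift N (0 : 'I_1) : 'I_(1+N)) 0); rewrite !mxE; case: splitP => [k _|k /= hk]; last by []. 
by rewrite ord1 !mxE /= => /eqP; rewrite oner_eq0.
Qed.
End M.

Section S.
Variable R : realFieldType.

Lemma sylvester m n (A : 'M[R]_(m, n)) (B : 'M[R]_(n, m)) :
  \det (1%:M - A *m B) = \det (1%:M - B *m A).
Proof.
have E1 : block_mx 1%:M A B 1%:M = block_mx 1%:M 0 B 1%:M *m block_mx 1%:M A 0 (1%:M - B *m A).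
  rewrite mulmx_block !mul1mx ?mul0mx ?mulmx0 ?addr0 ?add0r ?mulmx1.
  by rewrite addrC subrK.
have E2 : block_mx 1%:M A B 1%:M = block_mx 1%:M A 0 1%:M *m block_mx (1%:M - A *m B) 0 B 1%:M.
  rewrite mulmx_block !mul1mx ?mul0mx ?mulmx0 ?addr0 ?add0r ?mulmx1.
  by rewrite subrK.
have := congr1 determinant E1; rewrite E2 !det_mulmx det_lblock det_ublock det_lblock det_ublock !det1 !mul1r !mulr1.
by move=> ->.
Qed.

Lemma qfD N (A B : 'M[R]_N) v : qf (A + B) v = qf A v + qf B v.
Proof. by rewrite /qf mulmxDr mulmxDl mxE. Qed.

Lemma qfN N (A : 'M[R]_N) v : qf (- A) v = - qf A v.
Proof. by rewrite /qf mulmxN mulNmx mxE. Qed.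

Lemma qfB N (A B : 'M[R]_N) v : qf (A - B) v = qf A v - qf B v.
Proof. by rewrite qfD qfN. Qed.

Lemma qfZ N c (A : 'M[R]_N) v : qf (c *: A) v = c * qf A v.
Proof. by rewrite /qf -scalemxAr -scalemxAl mxE. Qed.

Lemma qf1 N (v : 'cV[R]_N) : qf 1%:M v = \sum_i v i 0 ^+ 2.
Proof. by rewrite /qf mulmx1 mxE; apply: eq_bigr => i _; rewrite mxE expr2. Qed.

Lemma qf1_ge0 N (v : 'cV[R]_N) : 0 <= qf 1%:M v.
Proof. by rewrite qf1 sumr_ge0 // => i _; rewrite sqr_ge0. Qed.

Lemma qf1_gt0 N (v : 'cV[R]_N) : v != 0 -> 0 < qf 1%:M v.
Proof.
move=> v0; rewrite lt_def qf1_ge0 andbT; apply/negP => /eqP.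
rewrite qf1 => /psumr_eq0P H; apply/negP: v0; rewrite negbK; apply/eqP/matrixP => i j.
rewrite ord1 mxE; apply/eqP; rewrite -sqrf_eq0; apply/eqP; apply: H => // k _; exact: sqr_ge0.
Qed.

Lemma qfAAt N D (A : 'M[R]_(N, D)) v : qf (A *m A^T) v = qf 1%:M (A^T *m v).
Proof. by rewrite /qf mulmx1 trmx_mul trmxK !mulmxA. Qed.

Lemma inv_step N (P : 'M[R]_N) s2 k : P *m P = P -> s2 != 0 -> s2 - k != 0 ->
  (s2 *: 1%:M - k *: P) *m (s2^-1 *: (1%:M + (k / (s2 - k)) *: P)) = 1%:M.
Proof.
move=> PP s0 sk.
rewrite -scalemxAr mulmxDr mulmx1 -scalemxAr mulmxBl -!scalemxAl mul1mx PP.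
apply/matrixP => i j; rewrite !mxE.
by field; rewrite sk s0.
Qed.

Lemma VQV0 N (V1 V2 W1 W2 : 'M[R]_N) c :
  V1 *m W1 = 1%:M -> W2 *m V2 = 1%:M ->
  V1 *m (W1 + W2 - c *: 1%:M) *m V2 = V2 + V1 - c *: (V1 *m V2).
Proof.
move=> VW WV.
rewrite mulmxBr mulmxDr VW mulmxBl mulmxDl mul1mx -mulmxA WV mulmx1.
by rewrite -scalemxAr mulmx1 -scalemxAl.
Qed.

Lemma VQV N (P1 P2 W1 W2 : 'M[R]_N) s2 k1 k2 : s2 != 0 ->
  (s2 *: 1%:M - k1 *: P1) *m W1 = 1%:M -> W2 *m (s2 *: 1%:M - k2 *: P2) = 1%:M ->
  (s2 *: 1%:M - k1 *: P1) *m (W1 + W2 - s2^-1 *: 1%:M) *m (s2 *: 1%:M - k2 *: P2)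
  = s2 *: (1%:M - (k1 * k2 / s2 ^+ 2) *: (P1 *m P2)).
Proof.
move=> s0 VW WV.
rewrite VQV0 // mulmxBl !mulmxBr -!scalemxAl -!scalemxAr !mul1mx !mulmx1.
apply/matrixP => i j; rewrite !mxE.
by field.
Qed.

Lemma V_scale N (P : 'M[R]_N) s2 k : s2 != 0 ->
  s2 *: 1%:M - k *: P = s2 *: (1%:M - (k / s2) *: P).
Proof. by move=> s0; rewrite scalerBr scalerA mulrCA divff // mulr1. Qed.

Lemma det_IP N D (A : 'M[R]_(N, D)) t : A^T *m A = 1%:M ->
  \det (1%:M - t *: (A *m A^T)) = (1 - t) ^+ D.
Proof.
move=> AA; rewrite scalemxAl sylvester -scalemxAr AA scalemx1 -raddfB /=.
by rewrite det_scalar.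
Qed.

Lemma CS p (u v : 'cV[R]_p) : \sum_i u i 0 * u i 0 = 1 -> \sum_i v i 0 * v i 0 = 1 ->
  (\sum_i u i 0 * v i 0) ^+ 2 <= 1.
Proof.
set r := \sum_i u i 0 * v i 0 => uu vv.
have E : \sum_i (u i 0 - r * v i 0) ^+ 2 = 1 - r ^+ 2.
  transitivity (\sum_i (u i 0 * u i 0 - (2 * r) * (u i 0 * v i 0) + r ^+ 2 * (v i 0 * v i 0))).
    by apply: eq_bigr => i _; ring.
  rewrite big_split sumrB /= -!mulr_sumr uu vv -/r; ring.
have : 0 <= \sum_i (u i 0 - r * v i 0) ^+ 2 by rewrite sumr_ge0 // => i _; rewrite sqr_ge0.
rewrite E; lra.
Qed.

Lemma key (t1 t2 r : R) : 0 < t1 < 1 -> 0 < t2 < 1 -> 0 <= r <= 1 ->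
  (r * t1 * t2) / (1 - r * t1 * t2) <= r * (t1 / (1 - t1) * (t2 / (1 - t2))) /\
  (r * t1 * t2) / (1 - r * t1 * t2) <= r * (t1 / (1 - t1)).
Proof.
move=> /andP[t10 t11] /andP[t20 t21] /andP[r0 r1].
have h12 : 0 < t1 * t2 by rewrite mulr_gt0.
have h12' : t1 * t2 < 1 by nra.
have hx : r * t1 * t2 <= t1 * t2 by rewrite -mulrA ler_piMl // ltW.
have x1 : 0 < 1 - r * t1 * t2 by lra.
have a1 : 0 < 1 - t1 by lra.
have a2 : 0 < 1 - t2 by lra.
split.
  rewrite ler_pdivrMr //.
  rewrite (_ : r * (t1 / (1 - t1) * (t2 / (1 - t2))) * (1 - r * t1 * t2) =
     (r * t1 * t2 * (1 - r * t1 * t2)) / ((1 - t1) * (1 - t2))); last by field; rewrite !gt_eqF.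
  rewrite ler_pdivlMr ?mulr_gt0 //.
  rewrite -!mulrA; apply: ler_wpM2l => //; rewrite !mulrA.
  have : (1 - t1) * (1 - t2) <= 1 - r * t1 * t2.
    have := mulr_ge0 (ltW t10) (ltW a2); have := mulr_ge0 (ltW t20) (ltW a1); lra.
  move=> h; have := ler_wpM2l (ltW h12) h; lra.
rewrite ler_pdivrMr //.
rewrite (_ : r * (t1 / (1 - t1)) * (1 - r * t1 * t2) = (r * t1 * (1 - r * t1 * t2)) / (1 - t1)); last by field; rewrite gt_eqF.
rewrite ler_pdivlMr //.
rewrite -!mulrA; apply: ler_wpM2l => //; apply: ler_wpM2l; first exact: ltW.
have : t2 * (1 - t1) <= 1 - r * t1 * t2 by nra.
lra.
Qed.

Lemma symW N (P1 P2 : 'M[R]_N) a b c d e : P1^T = P1 -> P2^T = P2 ->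
  (a *: (1%:M + b *: P1) + c *: (1%:M + d *: P2) - e *: 1%:M)^T =
  a *: (1%:M + b *: P1) + c *: (1%:M + d *: P2) - e *: 1%:M.
Proof.
move=> h1 h2; apply/matrixP => i j.
rewrite -[in RHS]h1 -[in RHS]h2 !mxE.
by rewrite [j == i]eq_sym.
Qed.
End S.

Section G.
Context {R : realType}.

Lemma gauss1 (s m c : R) : 0 < s ->
  (\int[@lebesgue_measure R]_(t in setT) (c * expR (- (1/2) * (s * (t - m) ^+ 2)))%:E)%E
  = (c * Num.sqrt (2 * pi / s))%:E.
Proof.
move=> s0.
set sg := Num.sqrt (s^-1).
have sg0 : sg != 0 by rewrite sqrtr_eq0 -ltNge invr_gt0.
have sg2 : sg ^+ 2 = s^-1 by rewrite sqr_sqrtr // invr_ge0 ltW.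
have pk : normal_peak sg = (Num.sqrt (2 * pi / s))^-1.
  rewrite /normal_peak sg2 -mulr_natr; congr (Num.sqrt _)^-1.
  by field; rewrite gt_eqF.
have E : forall t, c * expR (- (1/2) * (s * (t - m) ^+ 2)) =
   (c * Num.sqrt (2 * pi / s)) * normal_pdf m sg t.
  move=> t; rewrite normal_pdfE // pk /normal_fun sg2.
  have -> : - (t - m) ^+ 2 / (s^-1 *+ 2) = - (1/2) * (s * (t - m) ^+ 2).
    by rewrite -mulr_natr; field; rewrite gt_eqF.
  by field; rewrite sqrtr_eq0 -ltNge divr_gt0 // mulr_gt0 // pi_gt0.
have H1 := @integralZl _ _ _ (@lebesgue_measure R) setT measurableT (fun t => (normal_pdf m sg t)%:E) (integrable_normal_pdf m sg) (c * Num.sqrt (2 * pi / s)).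
rewrite integral_normal_pdf mule1 in H1.
etransitivity; last exact: H1.
apply: eq_integral => t _.
by rewrite E EFinM.
Qed.

Lemma vecN_cons N (y : nat -> R) t :
  vecN N.+1 (fun k => if k is k'.+1 then y k' else t) = col_mx (t%:M) (vecN N y) :> 'cV[R]_(1+N).
Proof.
apply/matrixP => i j; rewrite !mxE; case: splitP => k /= hk; rewrite !mxE.
  by rewrite hk !ord1 /= mulr1n.
by rewrite hk.
Qed.

Lemma gaussN N (Q : 'M[R]_N) : PD Q -> forall (K : R) (m : 'cV[R]_N), 0 <= K ->
  lebN N (fun x => (K * expR (- (1/2) * qf Q (vecN N x - m)))%:E)
  = (K * Num.sqrt ((2 * pi) ^+ N / \det Q))%:E.
Proof.
elim: N Q => [|N IH] Q PDQ K m K0.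
  rewrite /= det_mx00 expr0 divr1 sqrtr1 mulr1.
  by rewrite [vecN 0 _ - m]flatmx0 qf0 mulr0 expR0 mulr1.
have [QT QP] := PDQ.
have PC := PD_sub (PDQ : PD (Q : 'M[R]_(1+N))).
have dC := PD_det PC.
have uC : drsubmx (Q : 'M[R]_(1+N)) \in unitmx by rewrite unitmxE unitfE gt_eqF.
have dQ := schur_det QT uC.
set C := drsubmx (Q : 'M[R]_(1+N)) in PC dC uC dQ.
set r := invmx C *m dlsubmx (Q : 'M[R]_(1+N)) in dQ.
set s := (_ - _) in dQ.
have s0 : 0 < s.
  have := QP (col_mx (1%:M) (- r)).
  rewrite (qf_step _ _ QT uC) -/C -/r scale1r addNr qf0 add0r expr1n mulr1; apply.
  apply/negP => /eqP/matrixP/(_ (lshift N (0 : 'I_1) : 'I_(1+N)) 0); rewrite !mxE; case: splitP => [k _|k /= hk]; last by [].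
  by rewrite ord1 !mxE /= => /eqP; rewrite oner_eq0.
set m0 := usubmx (m : 'cV[R]_(1+N)) 0 0.
set m' := dsubmx (m : 'cV[R]_(1+N)).
have hm : m = col_mx (m0%:M) m'.
  by rewrite -[LHS](vsubmxK (m : 'cV[R]_(1+N))) {1}[usubmx _]mx11_scalar.
rewrite [LHS]/=.
transitivity (\int[@lebesgue_measure R]_(t in setT)
   ((K * Num.sqrt ((2 * pi) ^+ N / \det C)) * expR (- (1/2) * (s * (t - m0) ^+ 2)))%:E)%E.
  apply: eq_integral => t _.
  transitivity (lebN N (fun y => ((K * expR (- (1/2) * (s * (t - m0) ^+ 2))) *
     expR (- (1/2) * qf C (vecN N y - (m' - (t - m0) *: r))))%:E)).
    congr (lebN N _); apply/funext => y /=.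
    rewrite vecN_cons hm.
    rewrite (@opp_col_mx _ 1 N 1) (@add_col_mx _ 1 N 1) -raddfB /=.
    have E := @qf_step R N Q (t - m0) (vecN N y - m') QT uC. rewrite -/C -/r -/s in E. rewrite E.
    have -> : vecN N y - (m' - (t - m0) *: r) = (vecN N y - m') + (t - m0) *: r by rewrite opprB addrA addrAC.
    congr EFin; rewrite -mulrA -expRD; congr (K * expR _); ring.
  rewrite IH //; last by rewrite mulr_ge0 // expR_ge0.
  by congr EFin; ring.
rewrite gauss1 //; congr EFin.
rewrite -mulrA -sqrtrM; last by rewrite divr_ge0 // ?exprn_ge0 ?mulr_ge0 ?pi_ge0 // ltW.
congr (K * Num.sqrt _).
rewrite dQ exprS.
field.
by rewrite !gt_eqF.
Qed.
End G.

Section B.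
Context {R : realType}.

Lemma ucoordE p (u : 'cV[R]_p) (i : 'I_p) : ucoord u i = u i 0.
Proof. by rewrite /ucoord (big_pred1 i). Qed.

Lemma block_sum p n (F : nat -> R) j : (0 < p)%N -> (j < n)%N ->
  \sum_(a < p * n) (((a %/ p)%N == j)%:R * F (a %% p)%N) = \sum_(i < p) F i.
Proof.
move=> p0 jn.
rewrite -(big_mkord xpredT (fun a => ((a %/ p)%N == j)%:R * F (a %% p)%N)).
rewrite -(big_mkord xpredT F).
have h1 : (j * p <= j * p + p)%N by rewrite leq_addr.
have h2 : (j * p + p <= p * n)%N by rewrite -mulSnr mulnC leq_pmul2l.
rewrite (big_cat_nat (leq0n (j * p)) (leq_trans h1 h2)) /=.
rewrite (big_cat_nat h1 h2) /=.
rewrite big_nat_cond big1 ?add0r; last first.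
  move=> a /andP[/andP[_ ha] _].
  by rewrite (_ : ((a %/ p)%N == j) = false) ?mul0r // ltn_eqF // ltn_divLR.
rewrite [X in _ + X]big_nat_cond [X in _ + X]big1 ?addr0; last first.
  move=> a /andP[/andP[ha _] _].
  rewrite (_ : ((a %/ p)%N == j) = false) ?mul0r //.
  by rewrite gtn_eqF // leq_divRL // mulSn addnC.
rewrite -{1}[(j * p)%N]add0n big_addn addKn.
apply: eq_big_nat => i /andP[_ ip].
by rewrite addnC modnMDl modn_small // divnMDl // divn_small // addn0 eqxx mul1r.
Qed.

Lemma sum_ind D (c : nat) (g : nat -> R) :
  \sum_(j < D) ((c == j)%:R * g j) = (c < D)%N%:R * g c.
Proof.
case: (ltnP c D) => cD.
  rewrite (bigD1 (Ordinal cD)) //= eqxx mul1r big1 ?addr0 ?mul1r // => j /negP jc.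
  by rewrite (_ : (c == j) = false) ?mul0r //; apply/negP => /eqP cj; apply: jc; apply/eqP/val_inj.
rewrite big1 ?mul0r // => j _.
by rewrite (_ : (c == j) = false) ?mul0r // gtn_eqF // (leq_trans (ltn_ord j)).
Qed.

Definition Amat p n D (u : 'cV[R]_p) : 'M[R]_(p * n, D) :=
  \matrix_(a, j) (((a %/ p)%N == j)%:R * ucoord u (a %% p)%N).

Lemma AtA p n D D' (u v : 'cV[R]_p) : (0 < p)%N -> (D <= n)%N -> (D' <= n)%N ->
  (Amat n D u)^T *m Amat n D' v = \matrix_(j, k) ((j == k :> nat)%:R * dotv u v).
Proof.
move=> p0 Dn D'n; apply/matrixP => j k; rewrite !mxE.
have jn : (j < n)%N by rewrite (leq_trans (ltn_ord j)).
under eq_bigr do rewrite !mxE.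
case: (eqVneq (j : nat) k) => jk.
  rewrite mul1r -jk.
  rewrite (eq_bigr (fun a : 'I_(p * n) => ((a %/ p)%N == j)%:R * (ucoord u (a %% p)%N * ucoord v (a %% p)%N))); last first.
    move=> a _; case: ((a %/ p)%N == j); rewrite /= ?mul0r ?mul1r //.
  rewrite (block_sum (fun i => ucoord u i * ucoord v i)) // /dotv; apply: eq_bigr => i _; by rewrite !ucoordE.
rewrite mul0r big1 // => a _.
case: (eqVneq (a %/ p)%N j) => aj /=.
  by rewrite aj (negbTE jk) /= mul0r mulr0.
by rewrite !mul0r.
Qed.

Lemma Vmat_A p n s2 k D (u : 'cV[R]_p) : (0 < p)%N ->
  Vmat n s2 k D u = s2 *: 1%:M - k *: (Amat n D u *m (Amat n D u)^T).
Proof.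
move=> p0; apply/matrixP => a b; rewrite !mxE.
rewrite (eq_bigr (fun j : 'I_D => ((a %/ p)%N == j)%:R * (((b %/ p)%N == j)%:R * (ucoord u (a %% p)%N * ucoord u (b %% p)%N)))); last first.
  by move=> j _; rewrite !mxE; ring.
rewrite (sum_ind D (a %/ p)%N (fun j => (((b %/ p)%N == j)%:R * (ucoord u (a %% p)%N * ucoord u (b %% p)%N)))).
rewrite [((b %/ p)%N == _)]eq_sym.
by case: ((a %/ p)%N == (b %/ p)%N); case: (a %/ p < D)%N; rewrite /=; ring.
Qed.
End B.

Lemma gdE (R : realType) N (M : 'M[R]_N) v :
  gauss_density M v = (Num.sqrt ((2 * pi) ^+ N * \det M))^-1 * expR (- (1/2) * qf (invmx M) v).
Proof. by []. Qed.

Lemma sq4 (R : realType) (a b c d : R) : 0 <= a -> 0 <= b -> 0 <= c -> 0 <= d ->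
  ((Num.sqrt a)^-1 * (Num.sqrt b)^-1 / (Num.sqrt c)^-1 * Num.sqrt d) ^+ 2 = a^-1 * b^-1 * c * d.
Proof. by move=> *; rewrite !exprMn !exprVn !sqr_sqrtr // invrK. Qed.

Theorem lemma9 (R : realType) (p n : nat) (sigma : R)
    (D1 D2 : nat) (k1 k2 : R) (u1 u2 : 'cV[R]_p) :
  (1 <= p)%N -> (2 <= n)%N -> 0 < sigma ->
  (1 <= D1 <= n)%N -> (1 <= D2 <= n)%N ->
  0 < k1 < sigma ^+ 2 -> 0 < k2 < sigma ^+ 2 ->
  dotv u1 u1 = 1 -> dotv u2 u2 = 1 ->
  (D1 <= D2)%N ->
  let a1 := k1 / (sigma ^+ 2 - k1) in
  let a2 := k2 / (sigma ^+ 2 - k2) in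
  (gauss_expect (sigma ^+ 2)
     (fun x : 'cV[R]_(p * n) =>
        gauss_density (Vmat n (sigma ^+ 2) k1 D1 u1) x *
        gauss_density (Vmat n (sigma ^+ 2) k2 D2 u2) x /
        (gauss_density ((sigma ^+ 2) *: 1%:M) x) ^+ 2)%R
   <= (expR ((1/2) * (dotv u1 u2) ^+ 2 *
        Order.min (Num.sqrt (D1%:R / D2%:R) * Num.sqrt (D2%:R * a2 ^+ 2)
                     * Num.sqrt (D1%:R * a1 ^+ 2))
                  (D1%:R * a1)))%R%:E)%E.
Proof.
move=> p1 n2 sig0 /andP[D1a D1b] /andP[D2a D2b] /andP[k10 k1s] /andP[k20 k2s] u11 u22 D12; cbv zeta.
have p0 : (0 < p)%N by [].
rewrite !Vmat_A //.
set A1 := Amat n D1 u1; set A2 := Amat n D2 u2.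
set P1 := A1 *m A1^T; set P2 := A2 *m A2^T.
set s2 := sigma ^+ 2 in k1s k2s *.
set rho := dotv u1 u2.
have s20 : 0 < s2 by rewrite exprn_gt0.
have s0 : s2 != 0 by rewrite gt_eqF.
have sk1 : 0 < s2 - k1 by rewrite subr_gt0.
have sk2 : 0 < s2 - k2 by rewrite subr_gt0.
have A11 : A1^T *m A1 = 1%:M.
  by rewrite AtA // u11; apply/matrixP => i j; rewrite !mxE mulr1.
have A22 : A2^T *m A2 = 1%:M.
  by rewrite AtA // u22; apply/matrixP => i j; rewrite !mxE mulr1.
have P1P : P1 *m P1 = P1 by rewrite /P1 mulmxA -(mulmxA A1) A11 mulmx1.
have P2P : P2 *m P2 = P2 by rewrite /P2 mulmxA -(mulmxA A2) A22 mulmx1.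
have P1T : P1^T = P1 by rewrite /P1 trmx_mul trmxK.
have P2T : P2^T = P2 by rewrite /P2 trmx_mul trmxK.
set W1 := s2^-1 *: (1%:M + (k1 / (s2 - k1)) *: P1).
set W2 := s2^-1 *: (1%:M + (k2 / (s2 - k2)) *: P2).
have VW1 : (s2 *: 1%:M - k1 *: P1) *m W1 = 1%:M by apply: inv_step => //; rewrite gt_eqF.
have VW2 : (s2 *: 1%:M - k2 *: P2) *m W2 = 1%:M by apply: inv_step => //; rewrite gt_eqF.
have WV2 := mulmx1C VW2.
have iV1 : invmx (s2 *: 1%:M - k1 *: P1) = W1.
  have uV := (mulmx1_unit VW1).1.
  by have := mulKmx uV W1; rewrite VW1 mulmx1.
have iV2 : invmx (s2 *: 1%:M - k2 *: P2) = W2.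
  have uV := (mulmx1_unit VW2).1.
  by have := mulKmx uV W2; rewrite VW2 mulmx1.
have iS : invmx (s2 *: 1%:M : 'M[R]_(p * n)) = s2^-1 *: 1%:M.
  by rewrite scalemx1 invmx_scalar scalemx1.
set Qm := W1 + W2 - s2^-1 *: 1%:M.
have PDQ : PD Qm.
  split.
    exact: symW.
  move=> v v0.
  rewrite /Qm /W1 /W2 qfB !qfD !qfZ qfD qfZ qfD qfZ /P1 /P2 !qfAAt.
  have h1 := qf1_gt0 v0.
  have h2 := qf1_ge0 (A1^T *m v).
  have h3 := qf1_ge0 (A2^T *m v).
  have b1 : 0 <= k1 / (s2 - k1) by rewrite divr_ge0 // ltW.
  have b2 : 0 <= k2 / (s2 - k2) by rewrite divr_ge0 // ltW.
  set q1 := qf 1%:M v in h1 *; set x1 := qf 1%:M (A1^T *m v) in h2 *.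
  set x2 := qf 1%:M (A2^T *m v) in h3 *.
  set b1' := k1 / (s2 - k1) in b1 *; set b2' := k2 / (s2 - k2) in b2 *.
  rewrite (_ : _ - _ = s2^-1 * (q1 + b1' * x1 + b2' * x2)); last by ring.
  rewrite mulr_gt0 ?invr_gt0 //.
  have := mulr_ge0 b1 h2; have := mulr_ge0 b2 h3; lra.
set V1 := s2 *: 1%:M - k1 *: P1 in VW1 iV1 *.
set V2 := s2 *: 1%:M - k2 *: P2 in VW2 WV2 iV2 *.
pose c2 := (2 * pi) ^+ (p * n) : R.
have c20 : 0 < c2 by rewrite exprn_gt0 // mulr_gt0 // pi_gt0.
have dS : \det (s2 *: 1%:M : 'M[R]_(p * n)) = s2 ^+ (p * n) by rewrite detZ det1 mulr1.
have dV1 : \det V1 = s2 ^+ (p * n) * (1 - k1 / s2) ^+ D1.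
  by rewrite /V1 V_scale // detZ /P1 det_IP.
have dV2 : \det V2 = s2 ^+ (p * n) * (1 - k2 / s2) ^+ D2.
  by rewrite /V2 V_scale // detZ /P2 det_IP.
have rhoE : (A1^T *m P2) *m A1 = rho ^+ 2 *: 1%:M.
  rewrite /P2 !mulmxA -mulmxA AtA // AtA //.
  apply/matrixP => j l; rewrite !mxE.
  rewrite (eq_bigr (fun k : 'I_D2 => ((j : nat) == k)%:R * (((k : nat) == l)%:R * dotv u2 u1 * rho))); last first.
    by move=> k _; rewrite !mxE /rho; ring.
  rewrite (sum_ind D2 j (fun k => ((k == l)%:R * dotv u2 u1 * rho))).
  rewrite (leq_trans (ltn_ord j) D12) /= mul1r.
  rewrite (_ : dotv u2 u1 = rho); last by rewrite /rho /dotv; apply: eq_bigr => i _; rewrite mulrC.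
  by ring.
set x := k1 * k2 / s2 ^+ 2 * rho ^+ 2.
have dVQV : \det V1 * \det Qm * \det V2 = s2 ^+ (p * n) * (1 - x) ^+ D1.
  rewrite -!det_mulmx /V1 /V2 /Qm VQV //.
  rewrite detZ; congr (_ * _).
  rewrite /P1 -mulmxA scalemxAl sylvester -scalemxAr rhoE scalerA scalemx1.
  rewrite (_ : 1%:M - (k1 * k2 / s2 ^+ 2 * rho ^+ 2)%:M = (1 - (k1 * k2 / s2 ^+ 2 * rho ^+ 2))%:M :> 'M[R]_D1).
    by rewrite det_scalar.
  by apply/matrixP => i j; rewrite !mxE; case: (i == j); rewrite /= ?mulr1n ?mulr0n ?subr0.
have t1p : 0 < 1 - k1 / s2 by rewrite subr_gt0 ltr_pdivrMr // mul1r.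
have t2p : 0 < 1 - k2 / s2 by rewrite subr_gt0 ltr_pdivrMr // mul1r.
have dV1p : 0 < \det V1 by rewrite dV1 mulr_gt0 // exprn_gt0.
have dV2p : 0 < \det V2 by rewrite dV2 mulr_gt0 // exprn_gt0.
have dQ0 : 0 < \det Qm := PD_det PDQ.
pose K := (Num.sqrt (c2 * \det V1))^-1 * (Num.sqrt (c2 * \det V2))^-1 / (Num.sqrt (c2 * s2 ^+ (p * n)))^-1.
have K0 : 0 <= K by rewrite /K !(mulr_ge0, divr_ge0, invr_ge0, sqrtr_ge0).
have -> : gauss_expect s2 (fun x => gauss_density V1 x * gauss_density V2 x / gauss_density (s2 *: 1%:M) x ^+ 2)
   = lebN (p * n) (fun x => (K * expR (-(1/2) * qf Qm (vecN (p * n) x - 0)))%:E).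
  rewrite /gauss_expect; congr lebN; apply/funext => y; congr EFin.
  rewrite subr0 !gdE iV1 iV2 iS dS /Qm qfB qfD.
  rewrite (_ : forall a b c : R, -(1/2) * (a + b - c) = -(1/2) * a + (-(1/2) * b) + - (-(1/2) * c)); last by move=> *; ring.
  rewrite !expRD expRN /K.
  field.
  by apply/and4P; split; rewrite gt_eqF // ?expR_gt0 // sqrtr_gt0 mulr_gt0 // exprn_gt0.
rewrite (@gaussN R _ _ PDQ K 0 K0) lee_fin.
set t1 := k1 / s2; set t2 := k2 / s2.
have ht1 : 0 < t1 < 1 by rewrite /t1 divr_gt0 //= ltr_pdivrMr // mul1r.
have ht2 : 0 < t2 < 1 by rewrite /t2 divr_gt0 //= ltr_pdivrMr // mul1r.
have r01 : 0 <= rho ^+ 2 <= 1 by rewrite sqr_ge0 /= /rho /dotv CS.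
have xE : x = rho ^+ 2 * t1 * t2 by rewrite /x /t1 /t2; field.
have a1E : k1 / (s2 - k1) = t1 / (1 - t1) by rewrite /t1; field; rewrite ?s0 ?(gt_eqF sk1).
have a2E : k2 / (s2 - k2) = t2 / (1 - t2) by rewrite /t2; field; rewrite ?s0 ?(gt_eqF sk2).
have [key1 key2] := key ht1 ht2 r01.
rewrite -xE in key1 key2.
have x1 : 0 < 1 - x.
  rewrite xE; case/andP: ht1 => ? ?; case/andP: ht2 => ? ?; case/andP: r01 => ? ?.
  have : rho ^+ 2 * t1 * t2 <= t1 * t2 by rewrite -mulrA ler_piMl // ltW // mulr_gt0.
  nra.
have val2 : (K * Num.sqrt (c2 / \det Qm)) ^+ 2 = ((1 - x) ^+ D1)^-1.
  rewrite /K sq4 ?(mulr_ge0, divr_ge0, ltW c20, ltW dV1p, ltW dV2p, ltW dQ0, exprn_ge0, ltW s20, ltW sig0, invr_ge0) //.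
  have dQE : \det Qm = s2 ^+ (p * n) * (1 - x) ^+ D1 / (\det V1 * \det V2).
    by rewrite -dVQV; field; rewrite !gt_eqF.
  rewrite dQE -exprVn.
  have S0 : 0 < s2 ^+ (p * n) by rewrite exprn_gt0.
  set S := s2 ^+ (p * n) in S0 *.
  rewrite exprVn. set E := (1 - x) ^+ D1.
  have E0 : 0 < E by rewrite exprn_gt0.
  field.
  by rewrite !gt_eqF.
have M1E : Num.sqrt (D1%:R / D2%:R) * Num.sqrt (D2%:R * (k2 / (s2 - k2)) ^+ 2) *
           Num.sqrt (D1%:R * (k1 / (s2 - k1)) ^+ 2) = D1%:R * (k1 / (s2 - k1) * (k2 / (s2 - k2))).
  have D20 : (0 < D2%:R :> R) by rewrite ltr0n.
  have h1 : 0 <= D1%:R / D2%:R :> R by rewrite divr_ge0 // ler0n.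
  have h2 : 0 <= D1%:R / D2%:R * (D2%:R * (k2 / (s2 - k2)) ^+ 2) :> R.
    by rewrite mulr_ge0 // mulr_ge0 ?ler0n ?sqr_ge0.
  rewrite -sqrtrM // -sqrtrM //.
  rewrite (_ : D1%:R / D2%:R * (D2%:R * (k2 / (s2 - k2)) ^+ 2) * (D1%:R * (k1 / (s2 - k1)) ^+ 2) = (D1%:R * (k1 / (s2 - k1) * (k2 / (s2 - k2)))) ^+ 2); last first.
    by field; rewrite (gt_eqF sk1) (gt_eqF sk2) (gt_eqF D20).
  by rewrite sqrtr_sqr ger0_norm // mulr_ge0 // mulr_ge0 // divr_ge0 // ltW.
rewrite M1E -ler_sqr ?nnegrE ?expR_ge0 ?mulr_ge0 ?sqrtr_ge0 // val2 -expRM_natl.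
set z := x / (1 - x).
have x0 : 0 <= x.
  case/andP: ht1 => a _; case/andP: ht2 => b _; rewrite xE; apply: mulr_ge0; [apply: mulr_ge0; [exact: sqr_ge0 | exact: ltW] | exact: ltW].
have z0 : 0 <= z by rewrite /z; apply: divr_ge0; [exact: x0 | exact: ltW].
rewrite (_ : ((1 - x) ^+ D1)^-1 = (1 + z) ^+ D1); last first.
  by rewrite -exprVn /z; congr (_ ^+ _); field; rewrite gt_eqF.
apply: (@le_trans _ _ (expR z ^+ D1)).
  by rewrite lerXn2r ?nnegrE ?expR_ge0 ?addr_ge0 // expR_ge1Dx.
rewrite -expRM_natl ler_expR.
rewrite (_ : 2%:R * (1 / 2 * rho ^+ 2 * _) = rho ^+ 2 * Num.min (D1%:R * (k1 / (s2 - k1) * (k2 / (s2 - k2)))) (D1%:R * (k1 / (s2 - k1)))); last by field.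
rewrite a1E a2E -/z in key1 key2 *.
rewrite /Order.min; case: ifP => _.
  by rewrite [in X in _ <= X]mulrCA ler_wpM2l ?ler0n.
by rewrite [in X in _ <= X]mulrCA ler_wpM2l ?ler0n.
Qed.
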